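(* Every integer $n>1$ with $F_n=D_n$ is a prime power pseudoperfect number, i.e., \[ \sum_{p^k\mid n}\frac{1}{p^k}+\frac1n=1, \] where the sum ranges over all prime powers $p^k$ ($p$ prime, $k\ge1$) dividing $n$.
   Context: For a composite integer $n$, let $d(n)$ denote the largest divisor of $n$ with $1<d(n)<n$. Define $f$ on integers $n>1$ by $f(n)=n-1$ if $n$ is prime and $f(n)=n-d(n)$ if $n$ is composite. Let $f^{(0)}(n)=n$ and $f^{(i)}=f\circ f^{(i-1)}$. Define $F_n=\{n,f(n),f^{(2)}(n),\dots,1\}$, the set of iterates of $f$ starting at $n$ up to and including the first occurrence of $1$, and let $D_n$ be the set of positive divisors of $n$. A prime power pseudoperfect number is an integer $n>1$ satisfying $\sum_{p^k\mid n}1/p^k+1/n=1$, the sum over all prime powers $p^k$ ($p$ prime, $k\ge 1$) dividing $n$. *)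

(* Defs.v *)
From HB Require Import structures.
From mathcomp Require Import all_boot all_order all_algebra.
Set Implicit Arguments. Unset Strict Implicit. Unset Printing Implicit Defensive.

(* d(n): the largest divisor d of n with 1 < d < n (meaningful for composite n). *)
Definition dlarge (n : nat) : nat :=
  \max_(d <- divisors n | (1 < d) && (d < n)) d.

Definition f (n : nat) : nat := if prime n then n.-1 else n - dlarge n.

(* m belongs to F_n = {n, f(n), f^(2)(n), ..., 1}: m = f^(i)(n) for some i
   such that no earlier iterate f^(j)(n), j < i, equals 1. *)
Definition inF (n m : nat) : Prop :=
  exists i : nat, iter i f n = m /\ (forall j, j < i -> iter j f n <> 1).

Definition prime_power (q : nat) : bool :=
  [exists p : 'I_q.+1, [exists k : 'I_q.+1,
     [&& prime p, 0 < (k : nat) & q == (p : nat) ^ (k : nat)]]].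

(* Main.v *)
Require Import Defs.
From HB Require Import structures.
From mathcomp Require Import all_boot all_order all_algebra.
From mathcomp Require Import zify ring.
Import GRing.Theory Num.Theory.
Set Implicit Arguments. Unset Strict Implicit.

Definition Good m := forall a, 1 < a -> a %| m ->
  f a %| m /\ (forall b, b %| m -> f a < b -> a <= b).

Ltac clear_dvd := repeat match goal with
  | H : context [dvdn _ _] |- _ => clear H
  | H : context [inF _ _] |- _ => clear H
  | H : context [Good _] |- _ => clear H
  | H : context [coprime _ _] |- _ => clear H
  end.
Ltac flia := clear_dvd; lia.

Lemma f_le m : f m <= m.
Proof. rewrite /f; case: ifP => _; [exact: leq_pred | exact: leq_subr]. Qed.

Lemma dlarge_val a : 1 < a -> ~~ prime a -> dlarge a = a %/ pdiv a.
Proof.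
move=> a1 npa.
have a0 : 0 < a by flia.
have rpr := pdiv_prime a1.
have r1 : 1 < pdiv a by exact: prime_gt1.
have rd := pdiv_dvd a.
have ra : pdiv a < a.
  rewrite ltn_neqAle pdiv_leq // andbT; apply/eqP => E.
  by move: npa; rewrite -E rpr.
have Ea : a %/ pdiv a * pdiv a = a by rewrite divnK.
rewrite /dlarge; apply/eqP; rewrite eqn_leq; apply/andP; split.
  apply/bigmax_leqP_seq => d; rewrite -dvdn_divisors // => da /andP[d1 dlt].
  have Ed : a %/ d * d = a by rewrite divnK.
  have h1 : 1 < a %/ d.
    case: (ltngtP (a %/ d) 1) => //.
      by move=> /ltnSE; rewrite leqn0 => /eqP H; move: Ed; rewrite H mul0n; flia.
    by move=> H; move: Ed; rewrite H mul1n; flia.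
  have := pdiv_min_dvd h1 (dvdn_div da) => h2.
  rewrite leq_divRL ?prime_gt0 //.
  apply: (@leq_trans (d * (a %/ d))); first by rewrite leq_mul2l h2 orbT.
  by rewrite mulnC Ed.
apply: (@leq_bigmax_seq _ _ _ (fun d => d) (a %/ pdiv a)).
  by rewrite -dvdn_divisors // dvdn_div.
apply/andP; split.
  case: (ltngtP (a %/ pdiv a) 1) => //.
    by move=> /ltnSE; rewrite leqn0 => /eqP H; move: Ea; rewrite H mul0n; flia.
  by move=> H; move: Ea; rewrite H mul1n; flia.
rewrite ltn_divLR ?prime_gt0 //; nia.
Qed.

Lemma f_val a : 1 < a -> f a = a - a %/ pdiv a.
Proof.
move=> a1; rewrite /f; case: ifP => pa.
  by rewrite pdiv_id // divnn prime_gt0 // subn1.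
by rewrite dlarge_val // pa.
Qed.

Lemma f_val2 a : 1 < a -> f a = a %/ pdiv a * (pdiv a).-1.
Proof.
move=> a1; rewrite f_val //.
have a0 : 0 < a by flia.
have r0 : 0 < pdiv a by rewrite prime_gt0 // pdiv_prime.
have Ea : a %/ pdiv a * pdiv a = a by rewrite divnK // pdiv_dvd.
rewrite -{1}Ea -[X in _ - X]muln1 -mulnBr subn1 //.
Qed.

Lemma f_lt a : 1 < a -> f a < a.
Proof.
move=> a1; rewrite f_val //.
have a0 : 0 < a by flia.
have r1 : 1 < pdiv a by rewrite prime_gt1 // pdiv_prime.
have : 0 < a %/ pdiv a by rewrite divn_gt0 ?pdiv_leq // ltnW.
flia.
Qed.

Lemma iter_noninc n i j : i <= j -> iter j f n <= iter i f n.
Proof.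
move=> /subnK <-; elim: (j - i) => [|k IH] //.
by rewrite addSn iterS (leq_trans (f_le _)).
Qed.


Lemma good_of_hyp n : 1 < n -> (forall m : nat, inF n m <-> (0 < m /\ m %| n)) -> Good n.
Proof.
move=> n1 H a a1 an.
have n0 : 0 < n by flia.
have [i [Hi Hpre]] : inF n a by apply/H; split => //; flia.
have Hfa : inF n (f a).
  exists i.+1; split; first by rewrite iterS Hi.
  move=> j; rewrite ltnS leq_eqVlt => /orP[/eqP ->|/Hpre //]; rewrite Hi; flia.
split; first by have [] := (proj1 (H _) Hfa).
move=> b bn fab.
have b0 : 0 < b by apply: dvdn_gt0 n0 bn.
have [k [Hk _]] : inF n b by apply/H.
case: (leqP k i) => ki.
  by rewrite -Hi -Hk iter_noninc.
have := @iter_noninc n _ _ ki; rewrite Hk iterS Hi; flia.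
Qed.

Lemma ppP q : reflect (exists p k, [/\ prime p, 0 < k & q = p ^ k]) (prime_power q).
Proof.
apply: (iffP idP).
  move=> /existsP[p /existsP[k /and3P[pp k0 /eqP E]]].
  by exists (val p), (val k).
move=> [p [k [pp k0 E]]].
have p1 : 1 < p by exact: prime_gt1.
have hp : p < q.+1.
  rewrite ltnS E; rewrite -{1}(expn1 p); exact: leq_pexp2l (ltnW p1) k0.
have hk : k < q.+1 by rewrite E ltnS ltnW // ltn_expl.
apply/existsP; exists (Ordinal hp); apply/existsP; exists (Ordinal hk) => /=.
by rewrite pp k0 E eqxx.
Qed.

Definition ppsum m : rat := (\sum_(q <- divisors m | prime_power q) (q%:R : rat)^-1)%R.

Lemma ppsum_split P p e : prime p -> 0 < P -> coprime P p ->
  ppsum (P * p ^ e) = (ppsum P + \sum_(j < e) (((p ^ j.+1)%N%:R : rat)^-1))%R.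
Proof.
move=> pp P0 cP.
have p1 : 1 < p by exact: prime_gt1.
have p0 : 0 < p by flia.
have nPp : ~~ (p %| P) by rewrite -prime_coprime // coprime_sym.
rewrite /ppsum -(big_filter (divisors (P * p ^ e))) -(big_filter (divisors P)).
have -> : (\sum_(j < e) ((p ^ j.+1)%N%:R : rat)^-1 =
    \sum_(q <- [seq (p ^ j.+1)%N | j <- iota 0 e]) (q%:R : rat)^-1)%R.
  by rewrite big_map -(big_mkord xpredT (fun j : nat => ((p ^ j.+1)%N%:R : rat)^-1)%R) /index_iota subn0.
rewrite -big_cat; apply: perm_big; apply: uniq_perm.
- by rewrite filter_uniq // divisors_uniq.
- rewrite cat_uniq filter_uniq ?divisors_uniq //=; apply/andP; split.
    apply/hasPn => q /mapP[j _ ->]; rewrite mem_filter -dvdn_divisors //.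
    apply/negP => /andP[_ H]; apply: (negP nPp); apply: dvdn_trans H.
    by rewrite expnS dvdn_mulr.
  rewrite map_inj_uniq ?iota_uniq //.
  by move=> x y /(expnI p1) [].
move=> q; rewrite mem_cat !mem_filter -!dvdn_divisors ?muln_gt0 ?expn_gt0 ?p0 ?P0 //.
apply/idP/idP.
  move=> /andP[Hpp Hd]; have [r [k [pr k0 E]]] := elimT (@ppP q) Hpp.
  case: (eqVneq r p) => [rp|rp].
    apply/orP; right; apply/mapP; exists k.-1.
      rewrite mem_iota add0n /=.
      move: Hd; rewrite E rp pfactor_dvdn ?muln_gt0 ?expn_gt0 ?p0 ?P0 //.
      have cpP : coprime p P by rewrite coprime_sym.
      rewrite (logn_Gauss _ cpP) pfactorK //; flia.
    by rewrite E rp; case: k k0 {E}.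
  apply/orP; left; rewrite Hpp /=.
  move: Hd; rewrite Gauss_dvdl // E; apply: coprimeXl; apply: coprimeXr.
  by rewrite prime_coprime // dvdn_prime2.
move=> /orP[/andP[Hpp Hd]|/mapP[j]].
  by rewrite Hpp dvdn_mulr.
rewrite mem_iota add0n /= => je ->.
apply/andP; split.
  by apply/ppP; exists p, j.+1.
by apply: dvdn_mull; apply: dvdn_exp2l.
Qed.

Lemma fa_dvd n P p e a : prime p -> n = P * p ^ e -> coprime p P ->
  p = max_pdiv n -> 0 < n -> f a %| n -> 1 < a -> a %| P -> f a %| P.
Proof.
move=> pp En cP pmax n0 fan a1 aP.
have P0 : 0 < P by move: n0; rewrite En muln_gt0 => /andP[].
have a0 : 0 < a by flia.
have rpr := pdiv_prime a1.
have r1 : 1 < pdiv a by exact: prime_gt1.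
have nfa : ~~ (p %| f a).
  rewrite f_val2 // Euclid_dvdM // negb_or; apply/andP; split.
    apply/negP => H; have : p %| P by apply: (dvdn_trans (dvdn_trans H (dvdn_div (pdiv_dvd a))) aP).
    by apply/negP; rewrite -prime_coprime.
  apply/negP => H.
  have h1 : p <= (pdiv a).-1 by apply: dvdn_leq => //; flia.
  have h2 : pdiv a <= p.
    rewrite pmax; apply: max_pdiv_max; rewrite mem_primes rpr n0 /=.
    by rewrite En; apply: dvdn_mulr; apply: dvdn_trans (pdiv_dvd a) aP.
  flia.
have cfp : coprime (f a) (p ^ e) by apply: coprimeXr; rewrite coprime_sym prime_coprime.
by move: fan; rewrite En Gauss_dvdl.
Qed.

Lemma good_struct n : 1 < n -> Good n ->
  exists P p e, [/\ prime p, n = P * p ^ e, P = p.-1, 0 < e & coprime P p /\ Good P].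
Proof.
move=> n1 G.
have n0 : 0 < n by flia.
set p := max_pdiv n.
have pp : prime p by exact: max_pdiv_prime.
have p1 : 1 < p by exact: prime_gt1.
have pn : p %| n by exact: max_pdiv_dvd.
set e := logn p n.
have e0 : 0 < e by rewrite /e logn_gt0 mem_primes pp n0.
have [P cP En] := pfactor_coprime pp n0.
rewrite -/e in En.
have P0 : 0 < P by move: n0; rewrite En muln_gt0 => /andP[].
have nPp : ~~ (p %| P) by rewrite -prime_coprime.
have pm : p = max_pdiv n by [].
have GP : Good P.
  move=> a a1 aP.
  have an : a %| n by rewrite En dvdn_mulr.
  have [fan Hb] := G a a1 an.
  split; first exact: (fa_dvd pp En cP pm n0 fan a1 aP).
  by move=> b bP; apply: Hb; rewrite En dvdn_mulr.
exists P, p, e; split => //; last by split => //; rewrite coprime_sym.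
have fp : f p = p.-1 by rewrite /f pp.
have pP : p.-1 %| P.
  have [H _] := G p p1 pn.
  move: H; rewrite fp En Gauss_dvdl //.
  by apply: coprimeXr; apply: coprimePn; flia.
apply/eqP; rewrite eqn_leq (dvdn_leq P0 pP) andbT leqNgt; apply/negP => Plt.
have exP : exists a, (a %| P) && (p.-1 < a) by exists P; rewrite dvdnn Plt.
case: (ex_minnP exP) => a /andP[aP pa] amin.
have a1 : 1 < a by flia.
have ap : a != p by apply/negP => /eqP E; move: nPp; rewrite -E aP.
have pa' : p < a by flia.
have an : a %| n by rewrite En dvdn_mulr.
have [fan Hb] := G a a1 an.
have faP := fa_dvd pp En cP pm n0 fan a1 aP.
have flt := f_lt a1.
case: (ltnP (f a) p) => Hfp.
  by have := Hb p pn Hfp; flia.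
have h3 : p.-1 < f a by flia.
have := amin (f a); rewrite faP h3 => /(_ isT) h4.
by rewrite ltnNge h4 in flt.
Qed.

Lemma geom p e : 1 < p ->
  (\sum_(j < e) (((p ^ j.+1)%N%:R : rat)^-1) + ((p.-1 * p ^ e)%N%:R : rat)^-1
   = ((p.-1)%:R : rat)^-1)%R.
Proof.
move=> p1.
have Ep : ((p.-1)%:R : rat) = (p%:R - 1)%R by rewrite -subn1 natrB //; flia.
have x0 : (p%:R : rat) != 0%R by rewrite pnatr_eq0; flia.
have x1 : ((p%:R : rat) - 1)%R != 0%R by rewrite -Ep pnatr_eq0; flia.
elim: e => [|e IH].
  by rewrite big_ord0 add0r expn0 muln1.
rewrite big_ord_recr /=.
move: IH; rewrite !natrM !natrX Ep => IH.
rewrite -IH exprS.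
have xe : ((p%:R : rat) ^+ e)%R != 0%R by rewrite expf_neq0.
field.
by rewrite x1 x0 xe.
Qed.

Lemma main m : 0 < m -> Good m -> (ppsum m + (m%:R : rat)^-1 = 1)%R.
Proof.
elim/ltn_ind: m => m IH m0 Gm.
case: (ltngtP m 1) => [|m1|->]; first by flia.
  have [P [p [e [pp En EP e0 [cP GP]]]]] := good_struct m1 Gm.
  have p1 : 1 < p by exact: prime_gt1.
  have P0 : 0 < P by flia.
  have Plt : P < m by rewrite En -{1}(muln1 P) ltn_mul2l P0 /= -(expn0 p) ltn_exp2l.
  have IHP := IH P Plt P0 GP.
  rewrite En (@ppsum_split P p e pp P0 cP).
  rewrite -addrA EP geom // -EP.
  exact: IHP.
have pp1 : ~~ prime_power 1.
  apply/negP; case/ppP => p [k [pp k0 E1]].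
  have h1 := prime_gt1 pp.
  have : p <= p ^ k by rewrite -{1}(expn1 p) leq_pexp2l // prime_gt0.
  flia.
by rewrite /ppsum (_ : divisors 1 = [:: 1]) // big_cons big_nil (negbTE pp1) add0r invr1.
Qed.

Theorem theorem3 (n : nat) :
  1 < n ->
  (forall m : nat, inF n m <-> (0 < m /\ m %| n)) ->
  (\sum_(q <- divisors n | prime_power q) (q%:R : rat)^-1 + (n%:R : rat)^-1
     = 1)%R.
Proof.
move=> n1 H.
have := main (ltnW n1) (good_of_hyp n1 H).
by rewrite /ppsum.
Qed.
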